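(* Let $0\to\mathfrak{r}\to\mathfrak{f}\to\mathfrak{g}\to0$ be a free presentation of a Leibniz algebra $\mathfrak{g}$. Then for every $\mathrm{Lie}$-stem extension $0\to\mathfrak{m}\to\mathfrak{p}\to\mathfrak{g}\to0$ of $\mathfrak{g}$, the Leibniz algebra $\mathfrak{p}$ is an epimorphic image of $\mathfrak{f}/[\mathfrak{f},\mathfrak{r}]_{\mathrm{Lie}}$.
   Context: Fix a field $\mathbb{K}$ with $\frac12\in\mathbb{K}$. A Leibniz algebra is a $\mathbb{K}$-vector space with a bilinear bracket satisfying $[x,[y,z]]=[[x,y],z]-[[x,z],y]$. $\mathfrak{p}^{\mathrm{ann}}$ is the span of all $[x,x]$, $\mathfrak{p}_{\mathrm{Lie}}=\mathfrak{p}/\mathfrak{p}^{\mathrm{ann}}$. $[\mathfrak{m},\mathfrak{n}]_{\mathrm{Lie}}$ is the span of all $[m,n]+[n,m]$. $Z_{\mathrm{Lie}}(\mathfrak{p})=\{z:[x,z]+[z,x]=0\ \forall x\}$. An extension $0\to\mathfrak{m}\to\mathfrak{p}\to\mathfrak{g}\to0$ is a $\mathrm{Lie}$-stem extension if $\mathfrak{m}\subseteq Z_{\mathrm{Lie}}(\mathfrak{p})$ and the induced map $\mathfrak{p}_{\mathrm{Lie}}\to\mathfrak{g}_{\mathrm{Lie}}$ is an isomorphism. A free presentation is a short exact sequence $0\to\mathfrak{r}\to\mathfrak{f}\to\mathfrak{g}\to0$ with $\mathfrak{f}$ a free Leibniz algebra. *)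

(* Defs.v *)
From HB Require Import structures.
From mathcomp Require Import all_boot all_order all_algebra.
Set Implicit Arguments. Unset Strict Implicit. Unset Printing Implicit Defensive.
Import GRing.Theory.
Local Open Scope ring_scope.

Record leibnizAlgebra (K : fieldType) := LeibnizAlgebra {
  lcarrier :> lmodType K;
  lbr : lcarrier -> lcarrier -> lcarrier;
  lbr_linl : forall (a : K) (x y z : lcarrier),
      lbr (a *: x + y) z = a *: lbr x z + lbr y z;
  lbr_linr : forall (a : K) (x y z : lcarrier),
      lbr z (a *: x + y) = a *: lbr z x + lbr z y;
  lbr_leibniz : forall x y z : lcarrier,
      lbr x (lbr y z) = lbr (lbr x y) z - lbr (lbr x z) y
}.

Section Defs.
Variable K : fieldType.

Definition span (V : lmodType K) (S : V -> Prop) : V -> Prop :=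
  fun v => exists s : seq (K * V),
    (forall c, c \in s -> S c.2) /\ v = \sum_(c <- s) c.1 *: c.2.

Definition is_hom (A B : leibnizAlgebra K) (phi : A -> B) : Prop :=
  (forall (a : K) (x y : A), phi (a *: x + y) = a *: phi x + phi y) /\
  (forall x y : A, phi (lbr x y) = lbr (phi x) (phi y)).

Definition surj (A B : Type) (phi : A -> B) : Prop := forall b, exists a, phi a = b.

Definition is_free (F : leibnizAlgebra K) : Prop :=
  exists (X : Type) (i : X -> F),
    forall (L : leibnizAlgebra K) (h : X -> L),
      (exists phi : F -> L, is_hom phi /\ forall x, phi (i x) = h x) /\
      (forall phi psi : F -> L, is_hom phi -> is_hom psi ->
         (forall x, phi (i x) = h x) -> (forall x, psi (i x) = h x) ->
         forall y, phi y = psi y).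

Definition ann (P : leibnizAlgebra K) : P -> Prop :=
  span (fun v : P => exists x : P, v = lbr x x).

Definition lie_comm (P : leibnizAlgebra K) (M N : P -> Prop) : P -> Prop :=
  span (fun v : P => exists m n, M m /\ N n /\ v = lbr m n + lbr n m).

Definition lie_center (P : leibnizAlgebra K) : P -> Prop :=
  fun z => forall x : P, lbr x z + lbr z x = 0.

(* Lie-stem extension 0 -> m -> p -> g -> 0, with m identified with the kernel
   of the surjective homomorphism sigma : p -> g.  The induced map
   p_Lie = p/p^ann -> g_Lie = g/g^ann (well defined since sigma maps p^ann
   into g^ann) is surjective as sigma is; it is injective iff
   sigma^{-1}(g^ann) is contained in p^ann. *)
Definition lie_stem (P G : leibnizAlgebra K) (sigma : P -> G) : Prop :=
  [/\ is_hom sigma, surj sigma,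
      (forall z : P, sigma z = 0 -> lie_center z) &
      (forall x : P, ann (sigma x) -> ann x)].

End Defs.

(* Main.v *)
Require Import Defs.
From mathcomp Require Import all_boot all_order all_algebra.
From Stdlib Require Import ClassicalEpsilon.
Import GRing.Theory.
Local Open Scope ring_scope.

Set Implicit Arguments. Unset Strict Implicit.
Section Helpers.
Variable K : fieldType.

Lemma homD (A B : leibnizAlgebra K) (f : A -> B) : is_hom f ->
  forall x y, f (x + y) = f x + f y.
Proof. by move=> [H _] x y; rewrite -[x in LHS]scale1r H scale1r. Qed.

Lemma hom0 (A B : leibnizAlgebra K) (f : A -> B) : is_hom f -> f 0 = 0.
Proof.
move=> Hf; have := homD Hf 0 0; rewrite addr0 => H.
by apply/(addrI (f 0)); rewrite addr0 -H.
Qed.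

Lemma homZ (A B : leibnizAlgebra K) (f : A -> B) : is_hom f ->
  forall a x, f (a *: x) = a *: f x.
Proof. by move=> Hf a x; rewrite -[a *: x]addr0 (proj1 Hf) (hom0 Hf) addr0. Qed.

Lemma homB (A B : leibnizAlgebra K) (f : A -> B) : is_hom f ->
  forall x y, f (x - y) = f x - f y.
Proof.
move=> Hf x y; by rewrite -scaleN1r homD // homZ // scaleN1r.
Qed.

Lemma homsum (A B : leibnizAlgebra K) (f : A -> B) : is_hom f ->
  forall (s : seq (K * A)),
  f (\sum_(c <- s) c.1 *: c.2) = \sum_(c <- s) c.1 *: f c.2.
Proof.
move=> Hf; elim=> [|c s IH]; first by rewrite !big_nil hom0.
by rewrite !big_cons homD // homZ // IH.
Qed.

Lemma lbrDl (A : leibnizAlgebra K) (x y z : A) : lbr (x + y) z = lbr x z + lbr y z.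
Proof. by rewrite -[x in LHS]scale1r lbr_linl scale1r. Qed.

Lemma lbrDr (A : leibnizAlgebra K) (x y z : A) : lbr z (x + y) = lbr z x + lbr z y.
Proof. by rewrite -[x in LHS]scale1r lbr_linr scale1r. Qed.

Lemma sq_center (A : leibnizAlgebra K) (hK : (2%:R : K) != 0) (q m : A) :
  lie_center m -> lbr (q + m) (q + m) = lbr q q.
Proof.
move=> Hm; rewrite !lbrDl !lbrDr.
have H1 := Hm q.
have H2 : lbr m m = 0.
  have := Hm m => /eqP; rewrite -mulr2n -scaler_nat scaler_eq0 (negbTE hK) /=.
  by move/eqP.
by rewrite H2 addr0 -addrA H1 addr0.
Qed.

End Helpers.

Theorem mainTheorem16 (K : fieldType) (hK : (2%:R : K) != 0)
  (F G : leibnizAlgebra K) (pi : F -> G) :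
  is_free F -> is_hom pi -> surj pi ->
  forall (P : leibnizAlgebra K) (sigma : P -> G),
    lie_stem sigma ->
    exists phi : F -> P,
      [/\ is_hom phi, surj phi &
          forall v : F,
            lie_comm (fun _ : F => True) (fun r : F => pi r = 0) v -> phi v = 0].
Proof.
move=> [X [i Hfree]] Hpi Spi P sigma [Hs Ss Hc Ha].
pose h := fun x => proj1_sig (constructive_indefinite_description _ (Ss (pi (i x)))).
have hP : forall x, sigma (h x) = pi (i x).
  by move=> x; rewrite /h; case: constructive_indefinite_description.
have [[phi [Hphi Hphii]] _] := Hfree P h.
have Hcomp : is_hom (fun y => sigma (phi y)).
  split.
    by move=> a x y; rewrite (proj1 Hphi) (proj1 Hs).
  by move=> x y; rewrite (proj2 Hphi) (proj2 Hs).
have Spp : forall y, sigma (phi y) = pi y.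
  have [_ U] := Hfree G (fun x => pi (i x)).
  apply: (U _ _ Hcomp Hpi) => // x; by rewrite Hphii hP.
exists phi; split => //.
-
  have Hker : forall z, sigma z = 0 -> exists f, phi f = z.
    move=> z Hz.
    have : ann (sigma z) by rewrite Hz; exists [::]; rewrite big_nil.
    move/Ha => [s [Hs1 ->]].
    elim: s Hs1 => [|c s IH] Hs1.
      by exists 0; rewrite big_nil hom0.
    have [f' Hf'] : exists f', phi f' = \sum_(c <- s) c.1 *: c.2.
      by apply: IH => d Hd; apply: Hs1; rewrite in_cons Hd orbT.
    have [y Hy] := Hs1 c (mem_head _ _).
    have [a Ha'] := Spi (sigma y).
    have Hcm : lie_center (y - phi a).
      by apply: Hc; rewrite homB // Spp Ha' subrr.
    exists (c.1 *: lbr a a + f').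
    rewrite big_cons (proj1 Hphi) Hf' (proj2 Hphi) Hy.
    rewrite -(@sq_center _ P hK (phi a) _ Hcm).
    by rewrite (addrC (phi a)) subrK.
  move=> p.
  have [f0 Hf0] := Spi (sigma p).
  have [f1 Hf1] : exists f1, phi f1 = p - phi f0.
    by apply: Hker; rewrite homB // Spp Hf0 subrr.
  by exists (f0 + f1); rewrite homD // Hf1 addrC subrK.
- move=> v [s [Hs1 ->]].
  rewrite homsum //; apply: big1_seq => c /andP [_ Hcs].
  have [m [n [_ [Hn ->]]]] := Hs1 c Hcs.
  rewrite homD // !(proj2 Hphi).
  have Hcn : lie_center (phi n) by apply: Hc; rewrite Spp.
  by rewrite Hcn scaler0.
Qed.
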